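(* Let $p$ be any prime, $G=SL(2,\mathbb{Z}_p)$, $T=\{F\in SL(2,\mathbb{Z}_p):\mathrm{Tr}(F)\neq 2\pmod p\}$ and $\Gamma=\Gamma(G,T)$. Then assigning to each $F=\begin{pmatrix}\alpha&\beta\\ \gamma&\delta\end{pmatrix}$ the color $(\alpha,\beta)$ is a proper vertex coloring of $\Gamma$ with $p^2-1$ colors, so that $p(p-1)\leq\chi(\Gamma)\leq p^2-1$ and $\omega(\Gamma)\leq p^2-1$.
   Context: The Cayley graph $\Gamma(G,T)$ has vertex set $G$ and an edge between $g_1,g_2$ iff $g_1^{-1}g_2\in T$. A proper coloring assigns colors to vertices so that adjacent vertices receive different colors; $\chi(\Gamma)$ is the minimum number of colors in a proper coloring, and $\omega(\Gamma)$ is the largest size of a set of pairwise adjacent vertices. *)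

(* Defs.v *)
From HB Require Import structures.
From mathcomp Require Import all_boot all_order all_algebra.
Set Implicit Arguments. Unset Strict Implicit. Unset Printing Implicit Defensive.
Import GRing.Theory.
Local Open Scope ring_scope.

Definition proper_coloring (V : finType) (C : Type) (e : rel V) (c : V -> C) :=
  forall x y, e x y -> c x <> c y.

Definition colorable (V : finType) (e : rel V) (k : nat) : bool :=
  [exists c : {ffun V -> 'I_k}, [forall x, forall y, e x y ==> (c x != c y)]].

Lemma colorable_card (V : finType) (e : rel V) (irr : irreflexive e) :
  exists k, colorable e k.
Proof.
exists #|V|; apply/existsP; exists [ffun x => enum_rank x].
apply/forallP => x; apply/forallP => y; apply/implyP => exy; rewrite !ffunE.
apply/negP => /eqP Heq; have Hxy : x = y by exact: enum_rank_inj.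
by move: exy; rewrite Hxy irr.
Qed.

(* chromatic number: least k such that e is k-colourable (0 if e has a loop,
   which never happens for the graphs considered here) *)
Definition chromatic_number (V : finType) (e : rel V) : nat :=
  match boolP [forall x, ~~ e x x] with
  | AltTrue h =>
      ex_minn (colorable_card (fun x => negbTE (forallP h x)))
  | AltFalse _ => 0%N
  end.

Definition is_clique (V : finType) (e : rel V) (S : {set V}) :=
  [forall x in S, forall y in S, (x != y) ==> e x y].

Definition clique_number (V : finType) (e : rel V) : nat :=
  \max_(S : {set V} | is_clique e S) #|S|.

Definition SL2 (p : nat) := {A : 'M['F_p]_2 | \det A == 1}.

Definition inT (p : nat) (F : 'M['F_p]_2) : bool := \tr F != 2%:R.

Definition cayley_adj (p : nat) : rel (SL2 p) :=
  fun g1 g2 => inT (invmx (val g1) *m val g2).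

Definition top_row (p : nat) (F : SL2 p) : 'F_p * 'F_p :=
  (val F ord0 ord0, val F ord0 (lift ord0 ord0)).

(* Main.v *)
Require Import Defs.
From HB Require Import structures.
From mathcomp Require Import all_boot all_order all_algebra.
From mathcomp Require Import ring.
Import GRing.Theory.
Local Open Scope ring_scope.

Definition i1 : 'I_2 := lift ord0 ord0.

Lemma ord2P (i : 'I_2) : i = ord0 \/ i = i1.
Proof. case: i => [[|[|//]]] Hi; [left|right]; exact: val_inj. Qed.

Section S.
Variable R : comNzRingType.

Lemma det2 (M : 'M[R]_2) : \det M = M ord0 ord0 * M i1 i1 - M ord0 i1 * M i1 ord0.
Proof.
rewrite (expand_det_row _ ord0) big_ord_recl big_ord1 /cofactor !det_mx11 /=.
rewrite !mxE /= expr0 expr1.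
have -> : lift (lift ord0 ord0) 0 = ord0 :> 'I_2 by apply: val_inj.
have -> : lift ord0 0 = i1 :> 'I_2 by apply: val_inj.
rewrite /i1; ring.
Qed.

Lemma tr2 (M : 'M[R]_2) : \tr M = M ord0 ord0 + M i1 i1.
Proof. by rewrite /mxtrace big_ord_recl big_ord1. Qed.

Lemma mul2 (A B : 'M[R]_2) i j : (A *m B) i j = A i ord0 * B ord0 j + A i i1 * B i1 j.
Proof. by rewrite mxE big_ord_recl big_ord1. Qed.

Lemma det1B (M : 'M[R]_2) : \det (1 - M) = 1 - \tr M + \det M.
Proof. by rewrite !det2 tr2 !mxE /= /i1; ring. Qed.
End S.

Section P.
Variable p : nat.
Local Notation M := ('M['F_p]_2).

Lemma SL_det (F : SL2 p) : \det (val F) = 1.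
Proof. exact/eqP/(valP F). Qed.

Lemma SL_unit (F : SL2 p) : val F \in unitmx.
Proof. by rewrite unitmxE SL_det unitr1. Qed.

Lemma core (F G : SL2 p) :
  \det (val F - val G) = 2%:R - \tr (invmx (val F) *m val G).
Proof.
set H := invmx (val F) *m val G.
have eG : val G = val F *m H by rewrite /H mulKVmx // SL_unit.
have dH : \det H = 1 by rewrite /H det_mulmx det_inv !SL_det invr1 mulr1.
rewrite {1}eG -{1}(mulmx1 (val F)) -mulmxBr det_mulmx SL_det mul1r det1B dH.
by rewrite addrAC.
Qed.

Lemma adjE (F G : SL2 p) : cayley_adj F G = (\det (val F - val G) != 0).
Proof.
rewrite core /cayley_adj /inT; apply/idP/idP; apply: contra.
  by rewrite subr_eq0 eq_sym.
by move/eqP->; rewrite subrr.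
Qed.
End P.

Arguments SL_det {p}.
Arguments SL_unit {p}.
Arguments core {p}.
Arguments adjE {p}.

Section Fld.
Variable K : fieldType.
Lemma par3 (a b c a' b' c' : K) :
  a * (- a) - b * c = 0 -> a' * (- a') - b' * c' = 0 ->
  (a - a') * (- a - - a') - (b - b') * (c - c') = 0 ->
  [/\ a * b' = a' * b, a * c' = a' * c & b * c' = b' * c].
Proof.
move=> H1 H2 H3.
have sq (x y : K) : (x - y) ^+ 2 = 0 -> x = y.
  by move/eqP; rewrite sqrf_eq0 subr_eq0 => /eqP.
split; apply: sq.
- have -> : (a * b' - a' * b) ^+ 2 = - b'^+2 * (a * (- a) - b * c) - b^+2 * (a' * (- a') - b' * c')
     - b * b' * ((a - a') * (- a - - a') - (b - b') * (c - c') - (a * (- a) - b * c) - (a' * (- a') - b' * c')) by ring.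
  by rewrite H1 H2 H3; ring.
- have -> : (a * c' - a' * c) ^+ 2 = - c'^+2 * (a * (- a) - b * c) - c^+2 * (a' * (- a') - b' * c')
     - c * c' * ((a - a') * (- a - - a') - (b - b') * (c - c') - (a * (- a) - b * c) - (a' * (- a') - b' * c')) by ring.
  by rewrite H1 H2 H3; ring.
- have -> : (b * c' - b' * c) ^+ 2 = 
     ((a - a') * (- a - - a') - (b - b') * (c - c') - (a * (- a) - b * c) - (a' * (- a') - b' * c'))
       * (b * c' + b' * c - 2%:R * a * a') - 4%:R * a^+2 * (a' * (- a') - b' * c') + 4%:R * b' * c' * (a * (- a) - b * c) by ring.
  by rewrite H1 H2 H3; ring.
Qed.
End Fld.

Section Card.
Variable p : nat.
Hypothesis hp : prime p.

Lemma inj_card (T : finType) (S : {set T}) (f : T -> 'F_p) :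
  {in S &, injective f} -> (#|S| <= p)%N.
Proof.
move=> inj; rewrite -(card_in_imset inj); apply: leq_trans (max_card _) _; by rewrite card_Fp.
Qed.

Lemma par_card (T : finType) (S : {set T}) (a b c : T -> 'F_p) :
  {in S &, injective (fun x => (a x, b x, c x))} ->
  (forall x y, x \in S -> y \in S ->
     [/\ a x * b y = a y * b x, a x * c y = a y * c x & b x * c y = b y * c x]) ->
  (#|S| <= p)%N.
Proof.
move=> inj rel.
case: (boolP [exists x in S, a x != 0]) => [/exists_inP [x0 Sx0 nz] | /exists_inP na].
  apply: (@inj_card _ _ a) => y z Sy Sz ayz; apply: inj => //.
  have [e1 e2 _] := rel _ _ Sx0 Sy; have [f1 f2 _] := rel _ _ Sx0 Sz.
  have eb : b y = b z.
    apply: (mulfI nz); by rewrite e1 f1 ayz.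
  have ec : c y = c z.
    apply: (mulfI nz); by rewrite e2 f2 ayz.
  by rewrite ayz eb ec.
have a0 x : x \in S -> a x = 0.
  by move=> Sx; apply/eqP; apply/negPn/negP => h; apply: na; exists x.
case: (boolP [exists x in S, b x != 0]) => [/exists_inP [x0 Sx0 nz] | /exists_inP nb].
  apply: (@inj_card _ _ b) => y z Sy Sz byz; apply: inj => //.
  have [_ _ e3] := rel _ _ Sx0 Sy; have [_ _ f3] := rel _ _ Sx0 Sz.
  have ec : c y = c z.
    apply: (mulfI nz); by rewrite e3 f3 byz.
  by rewrite byz ec !a0.
have b0 x : x \in S -> b x = 0.
  by move=> Sx; apply/eqP; apply/negPn/negP => h; apply: nb; exists x.
apply: (@inj_card _ _ c) => y z Sy Sz cyz; apply: inj => //.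
by rewrite cyz !a0 ?b0.
Qed.
End Card.

Lemma subE (K : zmodType) (A B : 'M[K]_2) i j : (A - B) i j = A i j - B i j.
Proof. by rewrite !mxE. Qed.

Section Indep.
Variable p : nat.
Hypothesis hp : prime p.

Lemma nadj_det (F G : SL2 p) : ~~ cayley_adj F G -> \det (val F - val G) = 0.
Proof. by rewrite adjE negbK => /eqP. Qed.

Lemma indep_card (S : {set SL2 p}) :
  (forall x y, x \in S -> y \in S -> ~~ cayley_adj x y) -> (#|S| <= p)%N.
Proof.
move=> hS.
case: (set_0Vmem S) => [-> | [F0 HF0]]; first by rewrite cards0.
pose n (G : SL2 p) : 'M['F_p]_2 := invmx (val F0) *m (val G - val F0).
have tr0 G : G \in S -> n G i1 i1 = - n G ord0 ord0.
  move=> SG; apply/eqP; rewrite -subr_eq0 opprK addrC -tr2.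
  rewrite /n mulmxBr mulVmx ?SL_unit // raddfB /= mxtrace1.
  have := core F0 G; rewrite nadj_det ?hS // => /eqP.
  by rewrite eq_sym subr_eq0 => /eqP <-; rewrite subrr.
have dn G H : G \in S -> H \in S -> \det (n G - n H) = 0.
  move=> SG SH; rewrite /n -mulmxBr det_mulmx.
  have -> : val G - val F0 - (val H - val F0) = val G - val H.
    by rewrite opprB addrA subrK.
  by rewrite nadj_det ?hS // mulr0.
have dn0 G : G \in S -> \det (n G) = 0.
  move=> SG; have := dn G F0 SG HF0.
  by rewrite {2}/n subrr mulmx0 subr0.
apply: (@par_card p hp _ _ (fun G => n G ord0 ord0) (fun G => n G ord0 i1) (fun G => n G i1 ord0)).
  move=> G H SG SH /= [e1 e2 e3].
  have enn : n G = n H.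
    apply/matrixP => i j.
    case: (ord2P i) => ->; case: (ord2P j) => -> //.
    by rewrite (tr0 G SG) (tr0 H SH) e1.
  apply: val_inj; move: enn; rewrite /n => /(congr1 (mulmx (val F0))).
  rewrite !mulKVmx ?SL_unit // => /eqP; rewrite subr_eq subrK => /eqP //.
move=> G H SG SH; apply: par3.
- by rewrite -(tr0 _ SG) -det2 dn0.
- by rewrite -(tr0 _ SH) -det2 dn0.
- have := dn G H SG SH; rewrite det2 !subE (tr0 G SG) (tr0 H SH); apply.
Qed.
End Indep.

Lemma chromP (V : finType) (e : rel V) : (forall x, ~~ e x x) ->
  colorable e (chromatic_number e) /\ forall m, colorable e m -> (chromatic_number e <= m)%N.
Proof.
move=> irr; rewrite /chromatic_number; destruct (boolP [forall x, ~~ e x x]) as [h|h].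
  by case: ex_minnP.
by exfalso; move/negP: h; apply; apply/forallP.
Qed.

Definition mk (K : nzRingType) (a b c d : K) : 'M[K]_2 :=
  \matrix_(i, j) if i == ord0 then (if j == ord0 then a else b) else (if j == ord0 then c else d).

Arguments mk {K}.

Lemma det_mk (K : comNzRingType) (a b c d : K) : \det (mk a b c d) = a * d - b * c.
Proof. by rewrite det2 !mxE. Qed.

Section Main.
Variable p : nat.
Hypothesis hp : prime p.

Lemma det1eq : \det (1%:M : 'M['F_p]_2) == 1.
Proof. by rewrite det1. Qed.

Definition SL1 : SL2 p := exist _ 1%:M det1eq.
Definition SLof (M : 'M['F_p]_2) : SL2 p := insubd SL1 M.

Lemma SLofK M : \det M = 1 -> val (SLof M) = M.
Proof. by move=> h; rewrite /SLof insubdK //; apply/eqP. Qed.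

Lemma proper_top : proper_coloring (@cayley_adj p) (@top_row p).
Proof.
move=> x y + e; rewrite adjE det2 !subE; case: e => -> ->.
by rewrite !subrr !mul0r subrr eqxx.
Qed.

Definition Atop := [set top_row F | F : SL2 p].

Lemma topA : Atop = [set~ (0, 0)].
Proof.
apply/setP => [[a b]]; rewrite !inE; apply/imsetP/idP.
  case => F _ [-> ->]; apply/negP => /eqP [h1 h2].
  have := SL_det F; rewrite det2 /i1 h1 h2 !mul0r subrr => /eqP.
  by rewrite eq_sym oner_eq0.
move=> nz; case: (eqVneq a 0) => [a0 | anz].
  have bnz : b != 0 by apply: contraNneq nz => ->; rewrite a0.
  have dm : \det (mk 0 b (- b^-1) 0) = 1.
    by rewrite det_mk mul0r sub0r mulrN opprK mulfV.
  exists (SLof (mk 0 b (- b^-1) 0)) => //.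
  by rewrite /top_row SLofK // !mxE a0.
have dm : \det (mk a b 0 a^-1) = 1.
  by rewrite det_mk mulr0 subr0 mulfV.
exists (SLof (mk a b 0 a^-1)) => //.
by rewrite /top_row SLofK // !mxE.
Qed.

Lemma cardA : #|Atop| = (p ^ 2 - 1)%N.
Proof. by rewrite topA cardsC1 card_prod card_Fp // mulnn subn1. Qed.

Lemma colorable_top : colorable (@cayley_adj p) (p ^ 2 - 1).
Proof.
have x0 : ((1 : 'F_p), (0 : 'F_p)) \in Atop.
  by rewrite topA !inE xpair_eqE oner_eq0.
apply/existsP; exists [ffun x => cast_ord cardA (enum_rank_in x0 (top_row x))].
apply/forallP => x; apply/forallP => y; apply/implyP => exy; rewrite !ffunE.
apply/negP => /eqP /cast_ord_inj h.
have := congr1 enum_val h; rewrite !enum_rankK_in ?imset_f //.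
exact: proper_top.
Qed.

Lemma cardSL : (p * (p - 1) * p <= #|{: SL2 p}|)%N.
Proof.
pose src : {set 'F_p * 'F_p * 'F_p} := setX (setX [set~ (0 : 'F_p)] [set: 'F_p]) [set: 'F_p].
pose f (x : 'F_p * 'F_p * 'F_p) :=
  SLof (mk x.1.1 x.1.2 x.2 ((1 + x.1.2 * x.2) / x.1.1)).
have dm x : x \in src -> \det (mk x.1.1 x.1.2 x.2 ((1 + x.1.2 * x.2) / x.1.1)) = 1.
  case: x => [[a b] c]; rewrite !inE /= => /andP [anz _].
  rewrite det_mk [a * _]mulrC divfK; [ring | by move: anz; rewrite andbT].
have inj : {in src &, injective f}.
  move=> x y Sx Sy /(congr1 val); rewrite !SLofK ?dm //.
  case: x Sx => [[a b] c] _; case: y Sy => [[a' b'] c'] _ /= e.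
  have e1 := congr1 (fun M : 'M['F_p]_2 => M ord0 ord0) e.
  have e2 := congr1 (fun M : 'M['F_p]_2 => M ord0 i1) e.
  have e3 := congr1 (fun M : 'M['F_p]_2 => M i1 ord0) e.
  by move: e1 e2 e3; rewrite /= !mxE /= => -> -> ->.
have cs : #|src| = (p.-1 * p * p)%N.
  by rewrite !cardsX cardsC1 cardsT card_Fp.
apply: leq_trans (max_card (f @: src)).
rewrite card_in_imset // cs -subn1 mulnC.
by rewrite [X in (X <= _)%N]mulnC [(p * (p - 1))%N]mulnC.
Qed.

Lemma chrom_bounds :
  (p * (p - 1) <= chromatic_number (@cayley_adj p) <= p ^ 2 - 1)%N.
Proof.
have irr (x : SL2 p) : ~~ cayley_adj x x by rewrite adjE subrr det2 !mxE !mul0r subrr eqxx.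
have [col minc] := @chromP _ _ irr.
apply/andP; split; last exact: minc colorable_top.
move: col; set m := chromatic_number _ => /existsP [c /forallP hc].
have p0 : (0 < p)%N by exact: prime_gt0.
have hsum : (#|{: SL2 p}| <= m * p)%N.
  rewrite -sum1_card (partition_big (fun x => c x) xpredT) //=.
  apply: (@leq_trans (\sum_(j < m) p)); last by rewrite sum_nat_const card_ord.
  apply: leq_sum => i _.
  have -> : (\sum_(x | c x == i) 1 = #|[set x | c x == i]|)%N.
    by rewrite -sum1_card; apply: eq_bigl => x; rewrite inE.
  apply: (@indep_card p hp) => x y; rewrite !inE => /eqP cx /eqP cy.
  apply/negP => exy; have := forallP (hc x) y; rewrite exy /= cx cy eqxx //.
by rewrite -(leq_pmul2r p0); apply: leq_trans cardSL hsum.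
Qed.

Lemma clique_bound : (clique_number (@cayley_adj p) <= p ^ 2 - 1)%N.
Proof.
apply/bigmax_leqP => S /forall_inP hS.
have inj : {in S &, injective (@top_row p)}.
  move=> x y Sx Sy e; apply/eqP/negP => /negP nxy.
  have := forall_inP (hS x Sx) y Sy; rewrite nxy /= => exy.
  exact: (proper_top x y exy e).
rewrite -(card_in_imset inj) -cardA; apply: subset_leq_card.
by apply/subsetP => _ /imsetP [x _ ->]; rewrite /Atop imset_f.
Qed.
End Main.

Local Close Scope ring_scope.
Theorem mainTheorem4 (p : nat) (hp : prime p) :
  proper_coloring (@cayley_adj p) (@top_row p) /\
  #|[set top_row F | F : SL2 p]| = (p ^ 2 - 1)%N /\
  (p * (p - 1) <= chromatic_number (@cayley_adj p) <= p ^ 2 - 1)%N /\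
  (clique_number (@cayley_adj p) <= p ^ 2 - 1)%N.
Proof.
split; first exact: (proper_top p).
split; first exact: (cardA p hp).
split; first exact: (chrom_bounds p hp).
exact: (clique_bound p hp).
Qed.
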